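(* If $\sigma^2<\infty$, then \[\lim_{m\to\infty}\mathbf{P}(N(m)=1\mid N(m)\ge1)=1.\]
   Context: $\xi$ is a random variable on $\{0,1,2,\dots\}$ with $\mathbf{P}(\xi=k)=p_k$, mean $\mu\in(0,1)$ and variance $\sigma^2>0$; $\xi^*$ has the size-biased law $\mathbf{P}(\xi^*=k)=kp_k/\mu$, $k\ge1$. For a rooted tree $T$, $\mathcal{H}(T)$ is its height. Let $(\mathcal{T}_j)_{j\ge1}$ be independent Galton–Watson trees with offspring law $\xi$, independent of $\xi^*$, and $N(m)=\sum_{j=1}^{\xi^*-1}\mathbf{1}_{\{\mathcal{H}(\mathcal{T}_j)\ge m\}}$. *)

(* Defs.v *)
From HB Require Import structures.
From mathcomp Require Import all_boot all_order all_algebra.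
From mathcomp Require Import all_classical all_reals all_analysis.
Set Implicit Arguments. Unset Strict Implicit. Unset Printing Implicit Defensive.
Import Order.TTheory GRing.Theory Num.Theory.
Local Open Scope classical_set_scope.
Local Open Scope ring_scope.

(* Ulam--Harris encoding of a (possibly infinite) rooted plane tree from its
   offspring numbers: [X u] is the number of children of the vertex [u]
   (a word [u : seq nat]).
   This is Neveu's construction of a Galton--Watson tree when the
   [X u] are i.i.d. with the offspring law. *)
Fixpoint in_tree_from (X : seq nat -> nat) (pre u : seq nat) : bool :=
  match u with
  | [::] => true
  | i :: u' => (i < X pre)%N && in_tree_from X (rcons pre i) u'
  end.

Definition in_tree (X : seq nat -> nat) (u : seq nat) : bool :=
  in_tree_from X [::] u.

(* H(T) >= m : the tree has a vertex at depth m (trees are prefix closed,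
   the root has depth 0, H(T) = sup of the depths of vertices). *)
Definition height_ge (X : seq nat -> nat) (m : nat) : Prop :=
  exists u : seq nat, size u = m /\ in_tree X u.

Definition mutually_independent {d : measure_display} {T : measurableType d}
  {R : realType} (P : probability T R) (I : eqType) (Y : I -> T -> nat) : Prop :=
  forall (s : seq I), uniq s -> forall B : I -> set nat,
    P [set w | forall i, i \in s -> B i (Y i w)] =
    (\prod_(i <- s) P [set w | B i (Y i w)])%E.

(* The random variables of the model are indexed by
   None            : xi^*
   Some (j, u)     : number of children of vertex u in the tree T_j. *)
Definition gw_index := option (nat * seq nat).

Definition Nm {T : Type} (Y : gw_index -> T -> nat) (m : nat) (w : T) : nat :=
  (\sum_(1 <= j < Y None w) asbool (height_ge (fun u => Y (Some (j, u)) w) m))%N.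

(* Main.v *)
Require Import Defs.
From HB Require Import structures.
From mathcomp Require Import all_boot all_order all_algebra.
From mathcomp Require Import all_classical all_reals all_analysis.
From mathcomp Require Import zify ring lra.
Import Order.TTheory GRing.Theory Num.Theory.
Import numFieldNormedType.Exports.
Local Open Scope classical_set_scope.
Local Open Scope ring_scope.

Section Infra.
Context (d : measure_display) (T : measurableType d) (R : realType)
  (P : probability T R) (Y : gw_index -> T -> nat).
Hypothesis hmeas : forall i k, measurable [set w | Y i w = k].
Hypothesis hind : mutually_independent P Y.

Definition Ev (phi : seq nat -> gw_index) (H : set (seq nat -> nat)) : set T :=
  [set w | H (fun u => Y (phi u) w)].

Definition cyl : set (set (seq nat -> nat)) :=
  [set C | exists (s : seq (seq nat)) (B : seq nat -> set nat),
     C = [set f | forall u, u \in s -> B u (f u)]].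

Definition Sig := <<s cyl>>.

Lemma cyl_setI : setI_closed cyl.
Proof.
move=> A B [s1 [B1 ->]] [s2 [B2 ->]].
exists (s1 ++ s2), (fun u => [set x | (u \in s1 -> B1 u x) /\ (u \in s2 -> B2 u x)]).
apply/seteqP; split=> f /=.
  move=> [h1 h2] u _; split; [exact: h1 | exact: h2].
by move=> h; split=> u hu; have [] := h u; rewrite ?mem_cat ?hu ?orbT //; move=> + + ; auto.
Qed.

Lemma meas_pre i (B : set nat) : measurable [set w | B (Y i w)].
Proof.
have -> : [set w | B (Y i w)] = \bigcup_(k in B) [set w | Y i w = k].
  by apply/seteqP; split=> w /=; [move=> h; exists (Y i w) | move=> [k Bk hk]; rewrite hk].
by apply: bigcup_measurable => k _; exact: hmeas.
Qed.

Lemma meas_fin (I : eqType) (s : seq I) (E : I -> set T) :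
  (forall i, measurable (E i)) -> measurable [set w | forall i, i \in s -> E i w].
Proof.
move=> mE; elim: s => [|a s IH].
  by rewrite (_ : [set w | _] = setT) //; apply/seteqP; split=> w //=.
rewrite (_ : [set w | _] = E a `&` [set w | forall i, i \in s -> E i w]).
  exact: measurableI.
apply/seteqP; split=> w /=.
  by move=> h; split=> [|i hi]; apply: h; rewrite inE ?eqxx ?hi ?orbT.
by move=> [h1 h2] i; rewrite inE => /orP[/eqP->|/h2].
Qed.


Lemma Pfin (A : set T) : measurable A -> P A \is a fin_num.
Proof.
move=> mA; rewrite ge0_fin_numE ?measure_ge0 //.
by apply: (le_lt_trans (probability_le1 P mA)); rewrite ltry.
Qed.

Lemma cylT : cyl setT.
Proof. by exists [::], (fun _ => setT); apply/seteqP; split=> f //=. Qed.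

Definition lclass (g1 g2 : T -> (seq nat -> nat)) (R1 R2 : set T) (c : R) :=
  [set H : set (seq nat -> nat) | measurable (g1 @^-1` H) /\ measurable (g2 @^-1` H) /\
     P (g1 @^-1` H `&` R1) = (c%:E * P (g2 @^-1` H `&` R2))%E].

Lemma lam_gen (g1 g2 : T -> (seq nat -> nat)) (R1 R2 : set T) (c : R) :
  measurable R1 -> measurable R2 ->
  cyl `<=` lclass g1 g2 R1 R2 c -> Sig `<=` lclass g1 g2 R1 R2 c.
Proof.
move=> mR1 mR2 base.
apply: (lambda_system_subset cyl_setI) => //; split => //.
- exact: base cylT.
- move=> A B BA [mA1 [mA2 eA]] [mB1 [mB2 eB]].
  have sD (g : T -> (seq nat -> nat)) (Rr : set T) : g @^-1` (A `\` B) `&` Rr =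
      (g @^-1` A `&` Rr) `\` (g @^-1` B `&` Rr).
    apply/seteqP; split=> w /=.
      by move=> [[a b] r]; split=> // -[].
    move=> [[a r] nb]; split=> //; split=> // b; apply: nb; by split.
  have sDm (g : T -> (seq nat -> nat)) : g @^-1` (A `\` B) = g @^-1` A `\` g @^-1` B.
    by apply/seteqP; split=> w /=.
  split; first by rewrite sDm; exact: measurableD.
  split; first by rewrite sDm; exact: measurableD.
  have PD (g : T -> (seq nat -> nat)) (Rr : set T) : measurable Rr ->
      measurable (g @^-1` A) -> measurable (g @^-1` B) ->
      P (g @^-1` (A `\` B) `&` Rr) = (P (g @^-1` A `&` Rr) - P (g @^-1` B `&` Rr))%E.
    move=> mR mA mB; rewrite sD measureD; last 3 first.
    - exact: measurableI.
    - exact: measurableI.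
    - by apply: (le_lt_trans (probability_le1 P _)); [exact: measurableI | rewrite ltry].
    congr (_ - P _)%E; apply/seteqP; split=> w /=; first by move=> [[]].
    by move=> [b r]; split=> //; split=> //; apply: BA.
  rewrite PD // PD // eA eB muleBr //.
  rewrite fin_num_adde_defr //; apply: Pfin.
  by apply: measurableI.
- move=> F ndF hF.
  have sU (g : T -> (seq nat -> nat)) : g @^-1` (\bigcup_n F n) = \bigcup_n g @^-1` (F n).
    by apply/seteqP; split=> w /=.
  split; first by rewrite sU; apply: bigcup_measurable => n _; have [? _] := hF n.
  split; first by rewrite sU; apply: bigcup_measurable => n _; have [_ [? _]] := hF n.
  have cv (g : T -> (seq nat -> nat)) (Rr : set T) : measurable Rr ->
      (forall n, measurable (g @^-1` (F n))) ->
      (fun n => P (g @^-1` (F n) `&` Rr)) @ \oo --> P (g @^-1` (\bigcup_n F n) `&` Rr).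
    move=> mR mF; rewrite sU setI_bigcupl.
    apply: (nondecreasing_cvg_mu (mu := P)).
    + by move=> n; apply: measurableI.
    + by apply: bigcup_measurable => n _; apply: measurableI.
    + move=> a b ab; apply/subsetPset => w /= [h r]; split => //.
      by move/subsetPset: (ndF a b ab); apply.
  have c1 := cv g1 R1 mR1 (fun n => let: conj h _ := hF n in h).
  have c2 := cv g2 R2 mR2 (fun n => let: conj _ (conj h _) := hF n in h).
  have c2' := cvgeZl (y := c%:E) (fin_numE _) c2.
  have c3 : (fun n => P (g1 @^-1` F n `&` R1)) @ \oo --> (c%:E * P (g2 @^-1` (\bigcup_n F n) `&` R2))%E.
    apply: cvg_trans c2'; apply: near_eq_cvg; apply: nearW => n /=.
    by have [_ [_ ->]] := hF n.
  exact: (cvg_unique _ c1 c3).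
Qed.


Definition cylS (s : seq (seq nat)) (B : seq nat -> set nat) : set (seq nat -> nat) :=
  [set f | forall u, u \in s -> B u (f u)].

Definition Bp (phi : seq nat -> gw_index) (s : seq (seq nat)) (B : seq nat -> set nat) (i : gw_index) : set nat :=
  [set x | forall u, u \in s -> phi u = i -> B u x].

Lemma Ev_cyl phi s B : Ev phi (cylS s B) =
  [set w | forall i, i \in undup (map phi s) -> Bp phi s B i (Y i w)].
Proof.
apply/seteqP; split=> w /=.
  by move=> h i _ u us <-; apply: h.
move=> h u us; apply: (h (phi u)) => //.
by rewrite mem_undup; apply: map_f.
Qed.

Lemma P_Ev_cyl phi s B : P (Ev phi (cylS s B)) =
  (\prod_(i <- undup (map phi s)) P [set w | Bp phi s B i (Y i w)])%E.
Proof. by rewrite Ev_cyl; apply: hind; exact: undup_uniq. Qed.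

Lemma indep3_cyl (phi1 phi2 phi3 : seq nat -> gw_index) :
  (forall u v, phi1 u <> phi2 v) -> (forall u v, phi1 u <> phi3 v) ->
  (forall u v, phi2 u <> phi3 v) ->
  forall s1 B1 s2 B2 s3 B3,
  P (Ev phi1 (cylS s1 B1) `&` Ev phi2 (cylS s2 B2) `&` Ev phi3 (cylS s3 B3)) =
  (P (Ev phi1 (cylS s1 B1)) * P (Ev phi2 (cylS s2 B2)) * P (Ev phi3 (cylS s3 B3)))%E.
Proof.
move=> d12 d13 d23 s1 B1 s2 B2 s3 B3.
set S1 := undup (map phi1 s1); set S2 := undup (map phi2 s2); set S3 := undup (map phi3 s3).
pose Bc i := Bp phi1 s1 B1 i `&` Bp phi2 s2 B2 i `&` Bp phi3 s3 B3 i.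
have inS1 i : i \in S1 -> exists u, phi1 u = i.
  by rewrite mem_undup => /mapP[u _ ->]; exists u.
have inS2 i : i \in S2 -> exists u, phi2 u = i.
  by rewrite mem_undup => /mapP[u _ ->]; exists u.
have inS3 i : i \in S3 -> exists u, phi3 u = i.
  by rewrite mem_undup => /mapP[u _ ->]; exists u.
have E : Ev phi1 (cylS s1 B1) `&` Ev phi2 (cylS s2 B2) `&` Ev phi3 (cylS s3 B3) =
    [set w | forall i, i \in S1 ++ S2 ++ S3 -> Bc i (Y i w)].
  rewrite !Ev_cyl; apply/seteqP; split=> w /=.
    move=> [[h1 h2] h3] i; rewrite !mem_cat.
    have v1 : i \notin S1 -> Bp phi1 s1 B1 i (Y i w).
      move=> ni u us ei; apply: (h1 i) => //.
      by move: ni; rewrite mem_undup -ei map_f.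
    have v2 : i \notin S2 -> Bp phi2 s2 B2 i (Y i w).
      move=> ni u us ei; apply: (h2 i) => //.
      by move: ni; rewrite mem_undup -ei map_f.
    have v3 : i \notin S3 -> Bp phi3 s3 B3 i (Y i w).
      move=> ni u us ei; apply: (h3 i) => //.
      by move: ni; rewrite mem_undup -ei map_f.
    move=> _; split; [split|].
    - by case: (boolP (i \in S1)) => [/h1|/v1].
    - by case: (boolP (i \in S2)) => [/h2|/v2].
    - by case: (boolP (i \in S3)) => [/h3|/v3].
  move=> h; split; [split|] => i hi.
  - by have := h i; rewrite mem_cat hi => /(_ isT) [[]].
  - by have := h i; rewrite !mem_cat hi orbT => /(_ isT) [[]].
  - by have := h i; rewrite !mem_cat hi !orbT => /(_ isT) [].
have U : uniq (S1 ++ S2 ++ S3).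
  have h12 : ~~ has (fun x => x \in S1) S2.
    apply/hasPn => i /inS2[u <-]; apply/negP => /inS1[v e]; exact: (d12 v u e).
  have h13 : ~~ has (fun x => x \in S1) S3.
    apply/hasPn => i /inS3[u <-]; apply/negP => /inS1[v e]; exact: (d13 v u e).
  have h23 : ~~ has (fun x => x \in S2) S3.
    apply/hasPn => i /inS3[u <-]; apply/negP => /inS2[v e]; exact: (d23 v u e).
  by rewrite !cat_uniq !undup_uniq has_cat negb_or (negbTE h12) (negbTE h13) (negbTE h23).
rewrite E (hind _ U) !big_cat /= !P_Ev_cyl -/S1 -/S2 -/S3 muleA.
have e1 : (\prod_(i <- S1) P [set w | Bc i (Y i w)] = \prod_(i <- S1) P [set w | Bp phi1 s1 B1 i (Y i w)])%E.
  apply: eq_big_seq => i hi; congr (P _); apply/seteqP; split=> w /=.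
  - by move=> [[]].
  - move=> h; split; [split|] => // u _ ei; have [v ev] := inS1 _ hi;
      [exfalso; apply: (d12 v u) | exfalso; apply: (d13 v u)]; congruence.
have e2 : (\prod_(i <- S2) P [set w | Bc i (Y i w)] = \prod_(i <- S2) P [set w | Bp phi2 s2 B2 i (Y i w)])%E.
  apply: eq_big_seq => i hi; congr (P _); apply/seteqP; split=> w /=.
  - by move=> [[]].
  - move=> h; split; [split|] => // u _ ei; have [v ev] := inS2 _ hi;
      [exfalso; apply: (d12 u v) | exfalso; apply: (d23 v u)]; congruence.
have e3 : (\prod_(i <- S3) P [set w | Bc i (Y i w)] = \prod_(i <- S3) P [set w | Bp phi3 s3 B3 i (Y i w)])%E.
  apply: eq_big_seq => i hi; congr (P _); apply/seteqP; split=> w /=.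
  - by move=> [].
  - move=> h; split; [split|] => // u _ ei; have [v ev] := inS3 _ hi;
      [exfalso; apply: (d13 u v) | exfalso; apply: (d23 u v)]; congruence.
by rewrite e1 e2 e3.
Qed.


Definition vmap (phi : seq nat -> gw_index) (w : T) : seq nat -> nat := fun u => Y (phi u) w.

Lemma EvE phi H : Ev phi H = vmap phi @^-1` H.
Proof. by []. Qed.

Lemma meas_Ev_cyl phi C : cyl C -> measurable (Ev phi C).
Proof.
move=> [s [B ->]]; rewrite -/(cylS s B) Ev_cyl.
by apply: meas_fin => i; apply: meas_pre.
Qed.

Lemma meas_Ev phi H : Sig H -> measurable (Ev phi H).
Proof.
move=> SH.
have hb : cyl `<=` lclass (vmap phi) (vmap phi) setT setT 1.
  move=> C cC; split; first exact: meas_Ev_cyl.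
  by split; [exact: meas_Ev_cyl | rewrite mul1e].
by have [] := @lam_gen (vmap phi) (vmap phi) setT setT 1 measurableT measurableT hb H SH.
Qed.

Lemma step phi (Rr : set T) (r : \bar R) : measurable Rr -> r \is a fin_num ->
  (forall C, cyl C -> P (Ev phi C `&` Rr) = (P (Ev phi C) * r)%E) ->
  forall H, Sig H -> P (Ev phi H `&` Rr) = (P (Ev phi H) * r)%E.
Proof.
move=> mR fr base H SH.
have hb : cyl `<=` lclass (vmap phi) (vmap phi) Rr setT (fine r).
  move=> C cC; split; first exact: meas_Ev_cyl.
  split; first exact: meas_Ev_cyl.
  by rewrite -!EvE setIT base // fineK // muleC.
have [_ [_]] := @lam_gen (vmap phi) (vmap phi) Rr setT (fine r) mR measurableT hb H SH.
by rewrite -!EvE setIT => ->; rewrite fineK // muleC.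
Qed.

Lemma indep3 (phi1 phi2 phi3 : seq nat -> gw_index) :
  (forall u v, phi1 u <> phi2 v) -> (forall u v, phi1 u <> phi3 v) ->
  (forall u v, phi2 u <> phi3 v) ->
  forall H1 H2 H3, Sig H1 -> Sig H2 -> Sig H3 ->
  P (Ev phi1 H1 `&` Ev phi2 H2 `&` Ev phi3 H3) =
  (P (Ev phi1 H1) * P (Ev phi2 H2) * P (Ev phi3 H3))%E.
Proof.
move=> d12 d13 d23 H1 H2 H3 S1 S2 S3.
have fP phi H : Sig H -> P (Ev phi H) \is a fin_num.
  by move=> SH; apply: Pfin; apply: meas_Ev.
have fPc phi C : cyl C -> P (Ev phi C) \is a fin_num.
  by move=> SH; apply: Pfin; apply: meas_Ev_cyl.
have st1 : forall H, Sig H -> forall C2 C3, cyl C2 -> cyl C3 ->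
    P (Ev phi1 H `&` (Ev phi2 C2 `&` Ev phi3 C3)) =
    (P (Ev phi1 H) * (P (Ev phi2 C2) * P (Ev phi3 C3)))%E.
  move=> H SH C2 C3 c2 c3.
  apply: (@step phi1) => //.
  - by apply: measurableI; apply: meas_Ev_cyl.
  - by rewrite fin_numM // fPc.
  move=> C1 c1; rewrite setIA muleA.
  move: c1 c2 c3 => [s1 [B1 ->]] [s2 [B2 ->]] [s3 [B3 ->]].
  exact: indep3_cyl.
have st2 : forall C3, cyl C3 -> forall H, Sig H ->
    P (Ev phi2 H `&` (Ev phi1 H1 `&` Ev phi3 C3)) =
    (P (Ev phi2 H) * (P (Ev phi1 H1) * P (Ev phi3 C3)))%E.
  move=> C3 c3 H SH.
  apply: (@step phi2) => //.
  - by apply: measurableI; [apply: meas_Ev | apply: meas_Ev_cyl].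
  - by apply: fin_numM; [exact: fP | exact: fPc].
  move=> C2 c2; rewrite setICA st1 // muleCA //.
have st3 : P (Ev phi3 H3 `&` (Ev phi1 H1 `&` Ev phi2 H2)) =
    (P (Ev phi3 H3) * (P (Ev phi1 H1) * P (Ev phi2 H2)))%E.
  apply: (@step phi3) => //.
  - by apply: measurableI; apply: meas_Ev.
  - by apply: fin_numM; exact: fP.
  move=> C3 c3.
  have -> : Ev phi3 C3 `&` (Ev phi1 H1 `&` Ev phi2 H2) = Ev phi2 H2 `&` (Ev phi1 H1 `&` Ev phi3 C3).
    by apply/seteqP; split=> w /= [a [b c]].
  by rewrite st2 // muleCA [RHS]muleCA [(P (Ev phi3 C3) * _)%E]muleC.
have -> : Ev phi1 H1 `&` Ev phi2 H2 `&` Ev phi3 H3 = Ev phi3 H3 `&` (Ev phi1 H1 `&` Ev phi2 H2).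
  by apply/seteqP; split=> w /=; [move=> [[a b] c] | move=> [c [a b]]].
by rewrite st3 muleC.
Qed.


Lemma law_ext i j : (forall k, P [set w | Y i w = k] = P [set w | Y j w = k]) ->
  forall B : set nat, P [set w | B (Y i w)] = P [set w | B (Y j w)].
Proof.
move=> hij B.
have E l : [set w | B (Y l w)] = \bigcup_(k in B) [set w | Y l w = k].
  by apply/seteqP; split=> w /=; [move=> h; exists (Y l w) | move=> [k Bk hk]; rewrite hk].
have tr l : trivIset B (fun k => [set w | Y l w = k]).
  by move=> a b _ _ [w [/= <- <-]].
rewrite !E !measure_bigcup //; try by move=> k _; apply: hmeas.
by apply: eq_eseriesr => k _; exact: hij.
Qed.

Lemma same_law (phi psi : seq nat -> gw_index) : injective phi -> injective psi ->
  (forall u k, P [set w | Y (phi u) w = k] = P [set w | Y (psi u) w = k]) ->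
  forall H, Sig H -> P (Ev phi H) = P (Ev psi H).
Proof.
move=> iphi ipsi hl H SH.
have cylP (th : seq nat -> gw_index) s B : injective th -> P (Ev th (cylS s B)) =
    (\prod_(u <- undup s) P [set w | B u (Y (th u) w)])%E.
  move=> ith; rewrite P_Ev_cyl undup_map_inj // big_map big_seq [RHS]big_seq.
  apply: eq_bigr => u; rewrite mem_undup => us; congr (P _).
  apply/seteqP; split=> w /=; first by apply.
  by move=> h v vs /ith ->.
have hb : cyl `<=` lclass (vmap phi) (vmap psi) setT setT 1.
  move=> C cC; split; first exact: meas_Ev_cyl.
  split; first exact: meas_Ev_cyl.
  rewrite !setIT mul1e; case: cC => s [B ->].
  rewrite -!EvE !cylP //; apply: eq_bigr => u _; exact: law_ext.
have [_ [_]] := @lam_gen (vmap phi) (vmap psi) setT setT 1 measurableT measurableT hb H SH.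
by rewrite !setIT mul1e.
Qed.

End Infra.

Lemma in_tree_from_cat (f : seq nat -> nat) pre pre' u :
  in_tree_from f (pre ++ pre') u = in_tree_from (fun w => f (pre ++ w)) pre' u.
Proof.
elim: u pre' => [|i u IH] pre' //=.
by rewrite rcons_cat IH.
Qed.

Lemma height_ge_S (f : seq nat -> nat) m : height_ge f m.+1 ->
  exists2 i, (i < f [::])%N & height_ge (fun w => f (i :: w)) m.
Proof.
move=> [[|i u] [//= /eqP]]; rewrite eqSS => /eqP su.
rewrite /in_tree /= => /andP[ilt hu]; exists i => //; exists u; split => //.
by move: hu; rewrite /in_tree -[[:: i]]cats0 in_tree_from_cat.
Qed.

Lemma in_tree_fromE (f : seq nat -> nat) pre u :
  in_tree_from f pre u <->
  (forall k, (k < size u)%N -> (nth 0%N u k < f (pre ++ take k u))%N).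
Proof.
elim: u pre => [|i u IH] pre /=; first by split.
split.
  move=> /andP[ilt /IH h] [|k] /=; first by rewrite cats0.
  by rewrite ltnS => /h; rewrite -cat_rcons.
move=> h; apply/andP; split; first by have := h 0%N isT; rewrite cats0.
apply/IH => k ks; have := h k.+1 ks; by rewrite /= -cat_rcons.
Qed.

Lemma Sig_sigma : sigma_algebra setT Sig.
Proof. exact: smallest_sigma_algebra. Qed.

Lemma Sig_cyl s B : Sig (cylS s B).
Proof. by apply: sub_sigma_algebra; exists s, B. Qed.

Lemma Sig_set0 : Sig set0.
Proof. by case: Sig_sigma. Qed.

Lemma Sig_bigcup (F : nat -> set (seq nat -> nat)) : (forall n, Sig (F n)) -> Sig (\bigcup_n F n).
Proof. by case: Sig_sigma => _ _; apply. Qed.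

Definition Hgt (m : nat) : set (seq nat -> nat) := [set f | height_ge f m].

Lemma Sig_intree pre u : Sig [set f | in_tree_from f pre u].
Proof.
pose s := [seq pre ++ take k u | k <- iota 0 (size u)].
pose B (v : seq nat) := [set x | forall k, (k < size u)%N -> pre ++ take k u = v -> (nth 0%N u k < x)%N].
have -> : [set f | in_tree_from f pre u] = cylS s B; last exact: Sig_cyl.
apply/seteqP; split=> f /=.
  by move=> /in_tree_fromE h v _ k ks <-; apply: h.
move=> h; apply/in_tree_fromE => k ks.
apply: (h (pre ++ take k u)) => //.
by apply/mapP; exists k => //; rewrite mem_iota.
Qed.

Lemma Sig_Hgt m : Sig (Hgt m).
Proof.
pose F (n : nat) : set (seq nat -> nat) :=
  if @unpickle (seq nat) n is Some u then
    (if size u == m then [set f | in_tree f u] else set0) else set0.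
have -> : Hgt m = \bigcup_n F n.
  apply/seteqP; split=> f /=.
    move=> [u [su hu]]; exists (pickle u) => //.
    by rewrite /F pickleK su eqxx.
  move=> [n _]; rewrite /F; case: (unpickle n) => // u.
  by case: eqP => // su hu; exists u.
apply: Sig_bigcup => n; rewrite /F; case: (unpickle n) => [u|]; last exact: Sig_set0.
by case: eqP => _; [exact: Sig_intree | exact: Sig_set0].
Qed.

Lemma eseries_EFin (R : realType) (f : nat -> R) (l : R) :
  series f @ \oo --> l -> (\sum_(k <oo) (f k)%:E)%E = l%:E.
Proof.
move=> cf; apply/cvg_lim => //.
have -> : (fun n => (\sum_(0 <= k < n) (f k)%:E)%E) = EFin \o series f.
  by apply/funext => n /=; rewrite sumEFin.
by apply: cvg_comp cf _; apply: cvg_id.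
Qed.

Definition tv (j : nat) (u : seq nat) : gw_index := Some (j, u).
Definition stv (j i : nat) (u : seq nat) : gw_index := Some (j, i :: u).
Definition rv (j i : nat) (u : seq nat) : gw_index :=
  match u with [::] => Some (j, [::]) | x :: u' => Some (j, (i.+1 + x)%N :: u') end.
Definition sv (u : seq nat) : gw_index :=
  match u with [::] => None | x :: u' => Some (0%N, x :: u') end.

Definition root_is (k : nat) : set (seq nat -> nat) := [set f | f [::] = k].

Lemma Sig_root k : Sig (root_is k).
Proof.
have -> : root_is k = cylS [:: [::]] (fun _ => [set x | x = k]); last exact: Sig_cyl.
apply/seteqP; split=> f /=; first by move=> h u; rewrite inE => /eqP ->.
by move=> /(_ [::]); rewrite inE eqxx; apply.
Qed.

Lemma SigT : Sig setT.
Proof.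
have -> : (setT : set (seq nat -> nat)) = cylS [::] (fun _ => setT); last exact: Sig_cyl.
by apply/seteqP; split=> f.
Qed.


Lemma sum1_ex (b : nat -> bool) k : (1 <= \sum_(1 <= j < k) b j)%N ->
  exists j, [/\ (1 <= j)%N, (j < k)%N & b j].
Proof.
elim: k => [|k IH]; first by rewrite big_geq.
case: (leqP k 0) => [k0|k0].
  by rewrite big_geq // ltnS.
rewrite big_nat_recr //=; case bk: (b k) => /=.
  by move=> _; exists k.
rewrite addn0 => /IH [j [j1 jk bj]]; exists j; split => //; exact: ltnW.
Qed.

Lemma sum2_ex (b : nat -> bool) k : (2 <= \sum_(1 <= j < k) b j)%N ->
  exists i j, [/\ (1 <= i)%N, (i < k)%N, (1 <= j)%N, (j < k)%N & [/\ i != j, b i & b j]].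
Proof.
elim: k => [|k IH]; first by rewrite big_geq.
case: (leqP k 0) => [k0|k0].
  by rewrite big_geq // ltnS.
rewrite big_nat_recr //=; case bk: (b k) => /=.
  rewrite addn1 ltnS => /sum1_ex [j [j1 jk bj]].
  exists j, k; split => //; first exact: ltnW.
  by split => //; rewrite neq_ltn jk.
rewrite addn0 => /IH [i [j [i1 ik j1 jk [ij bi bj]]]]; exists i, j; split => //; exact: ltnW.
Qed.

Lemma sum_ge1 (b : nat -> bool) k : b 1%N -> (2 <= k)%N -> (1 <= \sum_(1 <= j < k) b j)%N.
Proof.
move=> b1 k2; rewrite big_ltn //= b1 //.
Qed.

Lemma ksq_cvg (R : realType) (p : nat -> R) (mu sigma2 : R) : mu != 0 ->
  series p @ \oo --> (1 : R) ->
  series (fun k => k%:R * p k) @ \oo --> mu ->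
  series (fun k => (k%:R - mu) ^+ 2 * p k) @ \oo --> sigma2 ->
  series (fun k => k%:R * (k%:R * p k / mu)) @ \oo --> (sigma2 + mu ^+ 2) / mu.
Proof.
move=> mu0 h1 hm hv.
have E : series (fun k => k%:R * (k%:R * p k / mu)) =
   (fun n => (series (fun k => (k%:R - mu) ^+ 2 * p k) n + 2 * mu * series (fun k => k%:R * p k) n
       - mu ^+ 2 * series p n) / mu).
  apply/funext => n; rewrite /series /= !big_distrr /= -sumrN -!big_split /= mulr_suml.
  by apply: eq_bigr => k _; field.
rewrite E; apply: cvgMr_tmp; rewrite (_ : sigma2 + mu ^+ 2 = sigma2 + 2 * mu * mu - mu ^+ 2 * 1).
  by apply: cvgB; [apply: cvgD => //; apply: cvgMl_tmp | apply: cvgMl_tmp].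
by rewrite mulr1; ring.
Qed.

Lemma tail_cvg (R : realType) (g : nat -> R) (S : R) K :
  series g @ \oo --> S ->
  series (fun k => if (K <= k)%N then g k else 0) @ \oo --> S - series g K.
Proof.
move=> hg.
have E n : (K <= n)%N -> series (fun k => if (K <= k)%N then g k else 0) n = series g n - series g K.
  move=> Kn; rewrite /series /= (big_cat_nat (n:=K)) //=.
  rewrite [X in (_ = X - _)](big_cat_nat (n:=K)) //=.
  rewrite big1_seq; last by move=> k /andP[_]; rewrite mem_index_iota => /andP[_ kK]; rewrite leqNgt kK.
  rewrite add0r addrAC subrr add0r; apply: eq_big_seq => k.
  by rewrite mem_index_iota => /andP[-> _].
apply: (cvg_trans (G := (series g n - series g K) @[n --> \oo])).
  apply: near_eq_cvg; near=> n; rewrite E //; near: n; exists K => //.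
by apply: cvgB => //; exact: cvg_cst.
Unshelve. all: by end_near. Qed.

Section Main.
Context (d : measure_display) (T : measurableType d) (R : realType)
  (P : probability T R) (p : nat -> R) (mu : R) (Y : gw_index -> T -> nat).
Hypothesis hp0 : forall k, 0 <= p k.
Hypothesis hsm : series (fun k => k%:R * p k) @ \oo --> mu.
Hypothesis hmeas : forall i k, measurable [set w | Y i w = k].
Hypothesis hind : mutually_independent P Y.
Hypothesis htree : forall j u k, P [set w | Y (Some (j, u)) w = k] = (p k)%:E.

Local Notation EvY := (@Ev d T Y).

Lemma mEv phi H : Sig H -> measurable (EvY phi H).
Proof. exact: (@meas_Ev d T R P Y hmeas). Qed.

Lemma fEv phi H : Sig H -> P (EvY phi H) \is a fin_num.
Proof. by move=> SH; apply: (@Pfin d T R P); apply: mEv. Qed.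

Definition q (m : nat) : R := fine (P (EvY (tv 1) (Hgt m))).

Lemma PA j m : P (EvY (tv j) (Hgt m)) = (q m)%:E.
Proof.
rewrite /q fineK; last by apply: fEv; exact: Sig_Hgt.
apply: (@same_law d T R P Y) => //; last exact: Sig_Hgt.
- by move=> u v [].
- by move=> u v [].
- by move=> u k; rewrite !htree.
Qed.

Lemma PS j i m : P (EvY (stv j i) (Hgt m)) = (q m)%:E.
Proof.
rewrite -(PA 1).
apply: (@same_law d T R P Y) => //; last exact: Sig_Hgt.
- by move=> u v [].
- by move=> u v [].
- by move=> u k; rewrite !htree.
Qed.

Lemma q_ge0 m : 0 <= q m.
Proof. by rewrite /q fine_ge0. Qed.

Lemma q_le1 m : q m <= 1.
Proof.
rewrite -lee_fin -(PA 1); apply: probability_le1.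
by apply: mEv; exact: Sig_Hgt.
Qed.


Lemma EvT phi : EvY phi setT = setT.
Proof. by apply/seteqP; split. Qed.

Lemma indep2 (phi1 phi2 phi3 : seq nat -> gw_index) :
  (forall u v, phi1 u <> phi2 v) -> (forall u v, phi1 u <> phi3 v) ->
  (forall u v, phi2 u <> phi3 v) ->
  forall H1 H2, Sig H1 -> Sig H2 ->
  P (EvY phi1 H1 `&` EvY phi2 H2) = (P (EvY phi1 H1) * P (EvY phi2 H2))%E.
Proof.
move=> d12 d13 d23 H1 H2 S1 S2.
have := @indep3 d T R P Y hmeas hind phi1 phi2 phi3 d12 d13 d23 H1 H2 setT S1 S2 SigT.
by rewrite !EvT setIT probability_setT mule1.
Qed.

Lemma root_indep j i k m :
  P ([set w | Y (Some (j, [::])) w = k] `&` EvY (stv j i) (Hgt m)) = (p k * q m)%:E.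
Proof.
have -> : [set w | Y (Some (j, [::])) w = k] = EvY (rv j i) (root_is k) by [].
rewrite (@indep2 (rv j i) (stv j i) (tv j.+1)).
- by rewrite PS EFinM -(htree j [::] k).
- case=> [|x u] v //= [] /eqP; rewrite eqn_leq => /andP[+ _]; rewrite addSn ltnNge leq_addr //.
- by case=> [|x u] v //= [] /eqP; rewrite -[j.+1]addn1 -{1}[j]addn0 eqn_add2l.
- by move=> u v [] /eqP; rewrite -[j.+1]addn1 -{1}[j]addn0 eqn_add2l.
- exact: Sig_root.
- exact: Sig_Hgt.
Qed.


Lemma qS m : q m.+1 <= mu * q m.
Proof.
rewrite -lee_fin -(PA 1).
set A := EvY (tv 1) (Hgt m.+1).
pose Rk k := [set w | Y (Some (1%N, [::])) w = k].
pose F k := A `&` Rk k.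
have mA : measurable A by apply: mEv; exact: Sig_Hgt.
have mF k : measurable (F k) by apply: measurableI => //; exact: hmeas.
have h1 : (P A <= \sum_(k <oo) P (F k))%E.
  apply: measure_sigma_subadditive => // w Aw.
  by exists (Y (Some (1%N, [::])) w).
have hk k : (P (F k) <= (k%:R * p k * q m)%:E)%E.
  pose G i := Rk k `&` EvY (stv 1 i) (Hgt m).
  have mG i : measurable (G i).
    by apply: measurableI; [exact: hmeas | apply: mEv; exact: Sig_Hgt].
  have sub : F k `<=` \big[setU/set0]_(i < k) G i.
    rewrite -bigcup_mkord => w [Aw /= Rw].
    have [i ilt hi] := @height_ge_S _ _ Aw.
    by exists i; [rewrite /= -Rw | split].
  apply: (le_trans (@content_subadditive _ _ _ P _ _ _ (fun i _ => mG i) (mF k) sub)).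
  rewrite (eq_bigr (fun=> (p k * q m)%:E)); last by move=> i _; exact: root_indep.
  by rewrite sumEFin big_const_ord iter_addr addr0 -mulrA mulr_natl.
have h2 : (\sum_(k <oo) P (F k) <= \sum_(k <oo) (k%:R * p k * q m)%:E)%E.
  by apply: lee_nneseries => // n _; exact: hk.
apply: (le_trans h1); apply: (le_trans h2).
rewrite (@eseries_EFin R _ (mu * q m)) //.
have -> : series (fun k => k%:R * p k * q m) = (fun n => series (fun k => k%:R * p k) n * q m).
  by apply/funext => n; rewrite /series /= big_distrl.
exact: cvgMr_tmp hsm.
Qed.


Lemma meas_S (E : nat -> set T) : (forall j, measurable (E j)) ->
  forall k n, measurable [set w | (\sum_(1 <= j < k) asbool (E j w))%N = n].
Proof.
move=> mE; elim=> [|k IH] n.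
  rewrite (_ : [set w | _] = if n == 0%N then setT else set0).
    by case: eqP.
  by apply/seteqP; split=> w /=; rewrite big_geq //; [move=> <- | case: eqP].
case: (leqP k 0) => [k0|k0].
  rewrite (_ : [set w | _] = if n == 0%N then setT else set0).
    by case: eqP.
  by apply/seteqP; split=> w /=; rewrite big_geq ?ltnS //; [move=> <- | case: eqP].
rewrite (_ : [set w | _] = ([set w | (\sum_(1 <= j < k) asbool (E j w))%N = n] `&` ~` E k) `|`
   ([set w | (\sum_(1 <= j < k) asbool (E j w))%N = n.-1] `&` (E k `&` [set w | (0 < n)%N]))).
  apply: measurableU; apply: measurableI => //; first exact: measurableC.
  apply: measurableI => //; case: (ltnP 0 n) => h.
    by rewrite (_ : [set w | _] = setT) //; apply/seteqP; split.
  by rewrite (_ : [set w | _] = set0) //; apply/seteqP; split => w //=; rewrite ltnNge h.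
apply/seteqP; split=> w /=; rewrite big_nat_recr //=.
  case: (asboolP (E k w)) => Ekw.
    by rewrite addn1 => <-; right; split => //.
  by rewrite addn0 => <-; left.
case=> [[<- nE]|[h1 [Ekw n0]]].
  by case: asboolP => // _; rewrite addn0.
by case: asboolP => // _; rewrite h1 addn1 prednK.
Qed.

Hypothesis hstar : forall k, P [set w | Y None w = k] = (k%:R * p k / mu)%:E.

Definition Astar k := [set w | Y None w = k].
Definition AN (m j : nat) := EvY (tv j) (Hgt m).

Lemma mAN m j : measurable (AN m j).
Proof. by apply: mEv; exact: Sig_Hgt. Qed.

Lemma meas_Nm m (Q : set nat) : measurable [set w | Q (Nm Y m w)].
Proof.
have -> : [set w | Q (Nm Y m w)] =
    \bigcup_(n in Q) \bigcup_k (Astar k `&` [set w | (\sum_(1 <= j < k) asbool (AN m j w))%N = n]).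
  apply/seteqP; split=> w /=.
    by move=> h; exists (Nm Y m w) => //; exists (Y None w).
  by move=> [n Qn [k _ [/= hk hS]]]; rewrite /Nm hk hS.
apply: bigcup_measurable => n _; apply: bigcup_measurable => k _.
apply: measurableI; first exact: hmeas.
by apply: meas_S => j; exact: mAN.
Qed.


Definition pis k := k%:R * p k / mu.

Lemma sv_tv j u v : (0 < j)%N -> sv u <> tv j v.
Proof. by case: j => // j _; case: u => [|x u] //= [] . Qed.

Lemma tv_tv i j u v : i != j -> tv i u <> tv j v.
Proof. by move=> /eqP ij [] /ij. Qed.

Lemma Astar_E k : Astar k = EvY sv (root_is k).
Proof. by []. Qed.

Lemma P_star_A k m j : (0 < j)%N -> P (Astar k `&` AN m j) = (pis k * q m)%:E.
Proof.
move=> j0; rewrite Astar_E /AN (@indep2 sv (tv j) (tv j.+1)).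
- by rewrite PA -Astar_E hstar EFinM.
- by move=> u v; exact: sv_tv.
- by move=> u v; exact: sv_tv.
- by move=> u v; apply: tv_tv; rewrite neq_ltn ltnSn.
- exact: Sig_root.
- exact: Sig_Hgt.
Qed.

Lemma P_star_AA k m i j : (0 < i)%N -> (0 < j)%N -> i != j ->
  P (Astar k `&` AN m i `&` AN m j) = (pis k * q m ^+ 2)%:E.
Proof.
move=> i0 j0 ij; rewrite Astar_E /AN (@indep3 d T R P Y hmeas hind sv (tv i) (tv j)).
- by rewrite !PA -Astar_E hstar -!EFinM expr2 mulrA.
- by move=> u v; exact: sv_tv.
- by move=> u v; exact: sv_tv.
- by move=> u v; exact: tv_tv.
- exact: Sig_root.
- exact: Sig_Hgt.
- exact: Sig_Hgt.
Qed.


Hypothesis hmu0 : 0 < mu.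

Lemma pis_ge0 k : 0 <= pis k.
Proof. by rewrite /pis divr_ge0 ?mulr_ge0 // ltW. Qed.

Lemma sum_le_const (n : nat) (f : nat -> \bar R) (c : R) :
  (forall i, (i < n)%N -> (f i <= c%:E)%E) -> (\sum_(i < n) f i <= (n%:R * c)%:E)%E.
Proof.
move=> h; have h2 : (\sum_(i < n) f i <= \sum_(i < n) c%:E)%E.
  by apply: lee_sum => i _; exact: (h i (ltn_ord i)).
apply: (le_trans h2); by rewrite sumEFin big_const_ord iter_addr addr0 mulr_natl.
Qed.

Lemma L1 m k : (P ([set w | (1 <= Nm Y m w)%N] `&` Astar k) <= (k%:R * (pis k * q m))%:E)%E.
Proof.
pose G j := if j == 0%N then set0 else Astar k `&` AN m j.
have mG j : measurable (G j).
  by rewrite /G; case: eqP => _ //; apply: measurableI; [exact: hmeas | exact: mAN].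
have sub : [set w | (1 <= Nm Y m w)%N] `&` Astar k `<=` \big[setU/set0]_(j < k) G j.
  rewrite -bigcup_mkord => w [/= h hk].
  move: h; rewrite /Nm hk => /sum1_ex [j [j1 jk bj]].
  exists j => //; rewrite /G; case: eqP => [j0|_]; first by rewrite j0 in j1.
  by split => //; apply/asboolP.
have mS : measurable ([set w | (1 <= Nm Y m w)%N] `&` Astar k).
  apply: measurableI; first exact: (meas_Nm m (fun n => (1 <= n)%N)). exact: hmeas.
apply: (le_trans (@content_subadditive _ _ _ P _ _ _ (fun i _ => mG i) mS sub)).
apply: (@sum_le_const k (fun j => P (G j))) => j _; rewrite /G; case: eqP => [_|/eqP j0].
  by rewrite measure0 lee_fin mulr_ge0 ?pis_ge0 ?q_ge0.
by rewrite P_star_A // lt0n.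
Qed.

Lemma L2 m k : (P ([set w | (2 <= Nm Y m w)%N] `&` Astar k) <= (k%:R * (k%:R * (pis k * q m ^+ 2)))%:E)%E.
Proof.
pose G i j := if (i == 0%N) || (j == 0%N) || (i == j) then set0 else Astar k `&` AN m i `&` AN m j.
have mG i j : measurable (G i j).
  rewrite /G; case: ifP => _ //; apply: measurableI; last exact: mAN.
  by apply: measurableI; [exact: hmeas | exact: mAN].
pose H i := \big[setU/set0]_(j < k) G i j.
have mH i : measurable (H i) by apply: bigsetU_measurable => j _.
have sub : [set w | (2 <= Nm Y m w)%N] `&` Astar k `<=` \big[setU/set0]_(i < k) H i.
  rewrite -bigcup_mkord => w [/= h hk].
  move: h; rewrite /Nm hk => /sum2_ex [i [j [i1 ik j1 jk [ij bi bj]]]].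
  exists i => //; rewrite /H -bigcup_mkord; exists j => //.
  rewrite /G; case: ifP => [/orP[/orP[/eqP i0|/eqP j0]|/eqP eij]|_].
  - by rewrite i0 in i1.
  - by rewrite j0 in j1.
  - by rewrite eij eqxx in ij.
  by split; [split|] => //; apply/asboolP.
have mS : measurable ([set w | (2 <= Nm Y m w)%N] `&` Astar k).
  apply: measurableI; first exact: (meas_Nm m (fun n => (2 <= n)%N)). exact: hmeas.
apply: (le_trans (@content_subadditive _ _ _ P _ _ _ (fun i _ => mH i) mS sub)).
apply: (@sum_le_const k (fun i => P (H i))) => i _.
have subi : H i `<=` \big[setU/set0]_(j < k) G i j by [].
apply: (le_trans (@content_subadditive _ _ _ P _ _ _ (fun j _ => mG i j) (mH i) subi)).
apply: (@sum_le_const k (fun j => P (G i j))) => j _; rewrite /G; case: ifP => [_|].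
  by rewrite measure0 lee_fin mulr_ge0 ?pis_ge0 ?exprn_ge0 ?q_ge0.
move/negbT; rewrite !negb_or -!lt0n => /andP[/andP[i0 j0] ij].
by rewrite P_star_AA.
Qed.

Lemma L3 m k : (2 <= k)%N -> ((pis k * q m)%:E <= P [set w | (1 <= Nm Y m w)%N])%E.
Proof.
move=> k2; rewrite -(@P_star_A k m 1) //; apply: le_measure.
- by rewrite inE; apply: measurableI; [exact: hmeas | exact: mAN].
- by rewrite inE; exact: (meas_Nm m (fun n => (1 <= n)%N)).
move=> w [/= hk ha]; rewrite /Nm hk; apply: sum_ge1 => //.
by apply/asboolP.
Qed.


Variable S1 : R.
Hypothesis hS1 : series (fun k => k%:R * pis k) @ \oo --> S1.

Definition tau K := S1 - series (fun k => k%:R * pis k) K.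

Lemma tau_ge0 K : 0 <= tau K.
Proof.
rewrite /tau subr_ge0 -(cvg_lim _ hS1) //.
apply: nondecreasing_cvgn_le; last by apply/cvg_ex; exists S1.
move=> a b ab; rewrite /series /= (big_cat_nat (n:=a) (m:=0) (p:=b)) //= -[X in (X <= _)%O]addr0 lerD2l.
by apply: sumr_ge0 => k _; rewrite mulr_ge0 ?pis_ge0.
Qed.

Lemma c_bound m K : (P [set w | (2 <= Nm Y m w)%N] <= (q m * (K%:R * q m * S1 + tau K))%:E)%E.
Proof.
set Q := q m.
have Q0 : 0 <= Q := q_ge0 m.
pose t k := Q * (K%:R * Q * (k%:R * pis k) + (if (K <= k)%N then k%:R * pis k else 0)).
have mS i k : measurable ([set w | (i <= Nm Y m w)%N] `&` Astar k).
  by apply: measurableI; [exact: (meas_Nm m (fun n => (i <= n)%N)) | exact: hmeas].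
have h1 : (P [set w | (2 <= Nm Y m w)%N] <= \sum_(k <oo) P ([set w | (2 <= Nm Y m w)%N] `&` Astar k))%E.
  apply: measure_sigma_subadditive => //; first exact: (meas_Nm m (fun n => (2 <= n)%N)).
  by move=> w hw; exists (Y None w).
have hk k : (P ([set w | (2 <= Nm Y m w)%N] `&` Astar k) <= (t k)%:E)%E.
  have pk := pis_ge0 k.
  case: (leqP K k) => Kk.
    have h2 : (P ([set w | (2 <= Nm Y m w)%N] `&` Astar k) <= P ([set w | (1 <= Nm Y m w)%N] `&` Astar k))%E.
      apply: le_measure; rewrite ?inE; [exact: mS | exact: mS |].
      by move=> w [/= h hk]; split => //; apply: leq_trans h.
    apply: (le_trans h2); apply: (le_trans (L1 m k)); rewrite lee_fin /t Kk.
    have : 0 <= K%:R * Q * (k%:R * pis k) by apply: mulr_ge0; apply: mulr_ge0.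
    rewrite -/Q.
    nra.
  apply: (le_trans (L2 m k)); rewrite lee_fin /t leqNgt Kk /= addr0.
  have kK : k%:R <= K%:R :> R by rewrite ler_nat ltnW.
  have h4 : 0 <= k%:R * pis k * Q * Q * (K%:R - k%:R) :> R.
    by apply: mulr_ge0; [apply: mulr_ge0 => //; apply: mulr_ge0 => //; apply: mulr_ge0 | rewrite subr_ge0].
  rewrite -/Q; nra.
have h3 : (\sum_(k <oo) P ([set w | (2 <= Nm Y m w)%N] `&` Astar k) <= \sum_(k <oo) (t k)%:E)%E.
  by apply: lee_nneseries => // n _; exact: hk.
apply: (le_trans h1); apply: (le_trans h3).
rewrite (@eseries_EFin R t (Q * (K%:R * Q * S1 + tau K))) //.
have -> : series t = (fun n => Q * (K%:R * Q * series (fun k => k%:R * pis k) n +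
     series (fun k => if (K <= k)%N then k%:R * pis k else 0) n)).
  apply/funext => n; rewrite /series /= /t -big_distrr /= big_split /= -big_distrr //.
apply: cvgMl_tmp; apply: cvgD; first exact: cvgMl_tmp.
exact: tail_cvg.
Qed.


Hypothesis hmu1 : mu < 1.

Lemma q_le_pow m : q m <= mu ^+ m.
Proof.
elim: m => [|m IH]; first by rewrite expr0 q_le1.
apply: (le_trans (qS m)); rewrite exprS ler_wpM2l //; exact: ltW.
Qed.

Lemma ex_k0 m : (0 < P [set w | (1 <= Nm Y m w)%N])%E ->
  exists k0, (2 <= k0)%N /\ 0 < pis k0.
Proof.
move=> hpos; apply/not_existsP => hno.
have z k : (2 <= k)%N -> pis k = 0.
  move=> k2; apply/eqP; rewrite eq_le pis_ge0 andbT leNgt; apply/negP => hk.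
  by apply: (hno k); split.
have h1 : (P [set w | (1 <= Nm Y m w)%N] <= \sum_(k <oo) P ([set w | (1 <= Nm Y m w)%N] `&` Astar k))%E.
  apply: measure_sigma_subadditive.
  - by move=> k; apply: measurableI; [exact: (meas_Nm m (fun n => (1 <= n)%N)) | exact: hmeas].
  - exact: (meas_Nm m (fun n => (1 <= n)%N)).
  - by move=> w hw; exists (Y None w).
have h2 : (\sum_(k <oo) P ([set w | (1 <= Nm Y m w)%N] `&` Astar k) = 0)%E.
  apply: eseries0 => k _ _; apply/eqP; rewrite -measure_le0.
  case: (ltnP k 2) => k2.
    rewrite (_ : _ `&` _ = set0) ?measure0 //.
    apply/seteqP; split=> w //= [h hk]; move: h; rewrite /Nm hk big_geq //.
  apply: (le_trans (y := P (Astar k))).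
    apply: le_measure; rewrite ?inE; last by move=> w [].
      by apply: measurableI; [exact: (meas_Nm m (fun n => (1 <= n)%N)) | exact: hmeas].
    exact: hmeas.
  by rewrite /Astar hstar -/(pis k) z.
by have := lt_le_trans hpos h1; rewrite h2 ltxx.
Qed.


Lemma S1_ge0 : 0 <= S1.
Proof.
have := tau_ge0 0; rewrite /tau /series /= big_geq // subr0 //.
Qed.

Lemma main_sec :
  (forall m, (0 < P [set w | (1 <= Nm Y m w)%N])%E) ->
  (fun m => fine (P [set w | Nm Y m w = 1%N]) / fine (P [set w | (1 <= Nm Y m w)%N]))
    @ \oo --> (1 : R).
Proof.
move=> hpos.
have [k0 [k02 pk0]] := @ex_k0 0%N (hpos 0%N).
set pi0 := pis k0.
pose a m := fine (P [set w | (1 <= Nm Y m w)%N]).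
pose b m := fine (P [set w | Nm Y m w = 1%N]).
pose c m := fine (P [set w | (2 <= Nm Y m w)%N]).
have m1 m : measurable [set w | (1 <= Nm Y m w)%N] := meas_Nm m (fun n => (1 <= n)%N).
have m2 m : measurable [set w | (2 <= Nm Y m w)%N] := meas_Nm m (fun n => (2 <= n)%N).
have me m : measurable [set w | Nm Y m w = 1%N] := meas_Nm m (fun n => n = 1%N).
have Ea m : P [set w | (1 <= Nm Y m w)%N] = (a m)%:E by rewrite fineK //; apply: Pfin.
have Ec m : P [set w | (2 <= Nm Y m w)%N] = (c m)%:E by rewrite fineK //; apply: Pfin.
have Eb m : P [set w | Nm Y m w = 1%N] = (b m)%:E by rewrite fineK //; apply: Pfin.
have abc m : a m = b m + c m.
  have U : [set w | (1 <= Nm Y m w)%N] = [set w | Nm Y m w = 1%N] `|` [set w | (2 <= Nm Y m w)%N].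
    apply/seteqP; split=> w /=.
      by case: (Nm Y m w) => [|[|n]] //= _; [left | right].
    by case=> [->|]; [|move=> h; apply: leq_trans h].
  have dj : [set w | Nm Y m w = 1%N] `&` [set w | (2 <= Nm Y m w)%N] = set0.
    by apply/seteqP; split=> w //= [->].
  rewrite /a /b /c U (measureU P (me m) (m2 m) dj) fineD //; apply: Pfin => //.
have a0 m : 0 < a m by rewrite -lte_fin -Ea.
have low m : pi0 * q m <= a m by rewrite -lee_fin -Ea; exact: L3.
have cb m K : c m <= q m * (K%:R * q m * S1 + tau K) by rewrite -lee_fin -Ec; exact: c_bound.
have c0 m : 0 <= c m by rewrite /c fine_ge0.
have E : (fun m => b m / a m) = (fun m => 1 - c m / a m).
  apply/funext => m; have := a0 m; rewrite lt0r => /andP[an0 _].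
  by rewrite (_ : b m = a m - c m) ?mulrBl ?divff //; rewrite abc addrK.
rewrite -/a -/b E.
suff h0 : (fun m => c m / a m) @ \oo --> (0 : R).
  by rewrite -[X in _ --> X]subr0; apply: cvgB => //; exact: cvg_cst.
apply/cvgrPdist_le => e e0.
have pi00 : 0 < pi0 := pk0.
set e2 := e * pi0 / 2.
have e20 : 0 < e2 by rewrite /e2 divr_gt0 // mulr_gt0.
have [N _ hN] := (cvgrPdist_le _ _).1 hS1 e2 e20.
have tK : tau N <= e2.
  by apply: (le_trans _ (hN N (leqnn N))); rewrite /tau ler_norm.
set KS := N%:R * S1.
have KS0 : 0 <= KS by rewrite mulr_ge0 // S1_ge0.
set del := e2 / (KS + 1).
have del0 : 0 < del by rewrite divr_gt0 // ltr_wpDl.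
have hmu : `|mu| < 1 by rewrite ger0_norm ?ltW.
have [M _ hM] := (cvgrPdist_le _ _).1 (cvg_expr hmu) del del0.
near=> m.
have mM : (M <= m)%N by near: m; exists M.
have qd : q m <= del.
  apply: (le_trans (q_le_pow m)); apply: (le_trans _ (hM m mM)).
  by rewrite sub0r normrN ger0_norm // exprn_ge0 // ltW.
have am := a0 m.
rewrite sub0r normrN ger0_norm; last by rewrite divr_ge0 // ltW.
rewrite ler_pdivrMr //.
have hq := q_ge0 m.
have hc := cb m N.
have hl := low m.
have ht := tau_ge0 N.
have kq : N%:R * q m * S1 <= e2.
  have -> : N%:R * q m * S1 = q m * KS by rewrite /KS; ring.
  have h5 : q m * KS <= del * KS by rewrite ler_wpM2r.
  apply: (le_trans h5); rewrite /del mulrAC ler_pdivrMr ?ltr_wpDl //; nra.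
have h6 : e2 + e2 = e * pi0 by rewrite /e2; field.
have Zle : N%:R * q m * S1 + tau N <= e * pi0 by lra.
have : q m * (N%:R * q m * S1 + tau N) <= q m * (e * pi0) by rewrite ler_wpM2l.
nra.
Unshelve. all: by end_near.
Qed.

End Main.

Theorem lemma3p1 (d : measure_display) (T : measurableType d) (R : realType)
  (P : probability T R) (p : nat -> R) (mu sigma2 : R)
  (Y : gw_index -> T -> nat) :
  (forall k, 0 <= p k) ->
  series p @ \oo --> (1 : R) ->
  series (fun k => k%:R * p k) @ \oo --> mu ->
  0 < mu < 1 ->
  (* sigma^2 < oo : the variance series converges to a real number *)
  series (fun k => (k%:R - mu) ^+ 2 * p k) @ \oo --> sigma2 ->
  0 < sigma2 ->
  (forall i k, measurable [set w | Y i w = k]) ->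
  mutually_independent P Y ->
  (forall k, P [set w | Y None w = k] = (k%:R * p k / mu)%:E) ->
  (forall j u k, P [set w | Y (Some (j, u)) w = k] = (p k)%:E) ->
  (* the conditioning events have positive probability *)
  (forall m, (0 < P [set w | (1 <= Nm Y m w)%N])%E) ->
  (fun m => fine (P [set w | Nm Y m w = 1%N]) / fine (P [set w | (1 <= Nm Y m w)%N]))
    @ \oo --> (1 : R).
Proof.
move=> hp0 hp1 hsm /andP[mu0 mu1] hvar hs0 hmeas hind hstar htree hpos.
have hS1 := @ksq_cvg R p mu sigma2 (lt0r_neq0 mu0) hp1 hsm hvar.
exact: (@main_sec d T R P p mu Y hp0 hsm hmeas hind htree hstar mu0 _ hS1 mu1 hpos).
Qed.
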